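(* In $\mathbb{R}^3$, for $r>0$ let $C_r=[0,\tfrac14]\times D_r$, where $D_r\subset\mathbb{R}^2$ is the disc of radius $r$ centred at $0$ (writing $z=(z_1,\mathbf z_2)$, $\mathbf z_2\in\mathbb{R}^2$). For $r\in(0,e^{-1})$ put $\varrho(r)=\frac{1}{r^2|\ln r|\ln|\ln r|}$ and $U_r(z)=\varrho(r)\mathbf 1_{C_r}(z)$. Then $$\lim_{\varepsilon\to0^+}\ \sup_{x\in\mathbb{R}^3,\ r\in(0,1/5)}\int_{|z-x|<\varepsilon}\frac{|U_r(z)|}{|z-x|}\,dz=0.$$ *)

(* Defs.v *)
From HB Require Import structures.
From mathcomp Require Import all_boot all_order all_algebra.
From mathcomp Require Import all_classical all_reals all_analysis.
Set Implicit Arguments. Unset Strict Implicit. Unset Printing Implicit Defensive.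
Import Order.TTheory GRing.Theory Num.Theory.
Import numFieldNormedType.Exports.
Local Open Scope classical_set_scope.
Local Open Scope ring_scope.

(* Points of R^3 are ((z1, z2), z3) : (R * R) * R; z = (z1, bold z2) with bold z2 = (z2, z3). *)
Definition leb3 (R : realType) :=
  (((@lebesgue_measure R) \x (@lebesgue_measure R)) \x (@lebesgue_measure R))%E.

Definition norm3 {R : realType} (z : (R * R) * R) : R :=
  Num.sqrt (z.1.1 ^+ 2 + z.1.2 ^+ 2 + z.2 ^+ 2).

Definition sub3 {R : realType} (z x : (R * R) * R) : (R * R) * R :=
  ((z.1.1 - x.1.1, z.1.2 - x.1.2), z.2 - x.2).

Definition Ccyl {R : realType} (r : R) : set ((R * R) * R) :=
  [set z | 0 <= z.1.1 <= 1 / 4 /\ z.1.2 ^+ 2 + z.2 ^+ 2 <= r ^+ 2].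

Definition rho {R : realType} (r : R) : R :=
  1 / (r ^+ 2 * `|ln r| * ln `|ln r|).

Definition Ur {R : realType} (r : R) (z : (R * R) * R) : R :=
  rho r * \1_(Ccyl r) z.

Definition Iloc {R : realType} (eps r : R) (x : (R * R) * R) : \bar R :=
  (\int[@leb3 R]_(z in [set z | (norm3 (sub3 z x) < eps)%R])
     ((`|Ur r z| / norm3 (sub3 z x))%R)%:E)%E.

Definition supI {R : realType} (eps : R) : \bar R :=
  ereal_sup [set v | exists x r, 0 < r < 1 / 5 /\ v = Iloc eps r x].

(* Main.v *)
Require Import Defs.
From HB Require Import structures.
From mathcomp Require Import all_boot all_order all_algebra.
From mathcomp Require Import all_classical all_reals all_analysis.
From mathcomp Require Import ring lra.
Import Order.TTheory GRing.Theory Num.Theory.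
Import numFieldNormedType.Exports.
Local Open Scope classical_set_scope.
Local Open Scope ring_scope.

Section Aux.
Variable R : realType.

Definition uu (r e : R) (N k : nat) : R :=
  if (k < N)%N then r ^+ 2 else (e / 2 ^+ k) ^+ 2.

Lemma geo_bound (n : nat) : forall e : R,
  \sum_(k < n) (e / 2 ^+ k) ^+ 2 <= 4 / 3 * e ^+ 2.
Proof.
elim: n => [|n IH] e.
  by rewrite big_ord0 mulr_ge0 // ?sqr_ge0.
rewrite big_ord_recl /= expr0 divr1.
have -> : \sum_(i < n) (e / 2 ^+ (bump 0 i)) ^+ 2 = \sum_(i < n) (e / 2 / 2 ^+ i) ^+ 2.
  by apply: eq_bigr => i _; rewrite /bump leq0n add1n [2 ^+ _.+1]exprS invfM mulrA.
have := IH (e / 2).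
have h : 4 / 3 * (e / 2) ^+ 2 = (4 / 3 * e ^+ 2) / 4 by field.
rewrite h; set S := \sum_(_ < _) _; move=> hS. lra.
Qed.

Lemma uu_bound (N : nat) : forall (r e : R) (n : nat),
  \sum_(k < n) uu r e N k <= N%:R * r ^+ 2 + 4 / 3 * (e / 2 ^+ N) ^+ 2.
Proof.
elim: N => [|N IH] r e n.
  rewrite mul0r add0r expr0 divr1.
  by apply: le_trans (geo_bound n e); apply: ler_sum => i _; rewrite /uu ltn0.
case: n => [|n].
  rewrite big_ord0; apply: addr_ge0; apply: mulr_ge0 => //; exact: sqr_ge0.
rewrite big_ord_recl /uu /= -/(uu _ _ _ _).
have -> : \sum_(i < n) uu r e N.+1 (bump 0 i) = \sum_(i < n) uu r (e / 2) N i.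
  by apply: eq_bigr => i _; rewrite /uu /bump leq0n add1n ltnS [2 ^+ _.+1]exprS invfM mulrA.
have := IH r (e / 2) n.
have -> : (e / 2 / 2 ^+ N) = e / 2 ^+ N.+1 by rewrite exprS invfM mulrA.
rewrite -natr1. lra.
Qed.

End Aux.
Arguments uu {R}.
Arguments uu_bound {R}.

Lemma eseries_le (R : realType) (u : nat -> R) (U : R) :
  (forall k, 0 <= u k) -> (forall n, \sum_(k < n) u k <= U) ->
  (\sum_(k <oo) (u k)%:E <= U%:E)%E.
Proof.
move=> u0 hU; apply: lime_le.
  by apply: is_cvg_nneseries => n _ _; rewrite lee_fin.
by apply: nearW => n; rewrite sumEFin lee_fin big_mkord.
Qed.

Lemma my_le_integral d (T : measurableType d) (R : realType)
  (mu : {measure set T -> \bar R}) (D : set T) (f g : T -> \bar R) :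
  (forall x, D x -> (0 <= f x)%E) -> (forall x, D x -> (f x <= g x)%E) ->
  (\int[mu]_(x in D) f x <= \int[mu]_(x in D) g x)%E.
Proof.
move=> f0 fg.
have g0 : forall x, D x -> (0 <= g x)%E by move=> x Dx; exact: le_trans (f0 _ Dx) (fg _ Dx).
rewrite (ge0_integralE _ f0). rewrite (ge0_integralE _ g0).
apply: ereal_sup_le; move=> _ [h hf <-]; exists h => //= x.
exact: le_trans (hf x) (lee_restrict fg x).
Qed.

Section Box.
Variable R : realType.

Definition I2 (r b s : R) : set R := [set` `[-r, r]] `&` [set` `](b - s), (b + s)[].

Lemma mI2 r b s : measurable (I2 r b s).
Proof. by apply: measurableI; exact: measurable_itv. Qed.

Lemma leb_itv_oo (a b : R) : a < b -> lebesgue_measure [set` `]a, b[] = (b - a)%:E.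
Proof. by move=> ab; rewrite lebesgue_measure_itv /= lte_fin ab. Qed.

Lemma leb_itv_cc (a b : R) : a < b -> lebesgue_measure [set` `[a, b]] = (b - a)%:E.
Proof. by move=> ab; rewrite lebesgue_measure_itv /= lte_fin ab. Qed.

Lemma I2_le r b s m : 0 < r -> 0 < s -> (r <= m \/ s <= m) ->
  (lebesgue_measure (I2 r b s) <= (2 * m)%:E)%E.
Proof.
move=> r0 s0 [rm|sm].
- apply: (@le_trans _ _ (lebesgue_measure [set` `[-r, r]])).
    apply: le_measure; rewrite ?inE; [exact: mI2|exact: measurable_itv|].
    by move=> y [].
  rewrite leb_itv_cc ?lee_fin; lra.
- apply: (@le_trans _ _ (lebesgue_measure [set` `](b - s), (b + s)[])).
    apply: le_measure; rewrite ?inE; [exact: mI2|exact: measurable_itv|].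
    by move=> y [].
  rewrite leb_itv_oo ?lee_fin; lra.
Qed.

Definition box (a b c s r : R) := ([set` `](a - s), (a + s)[] `*` I2 r b s) `*` I2 r c s.

Lemma mbox a b c s r : measurable (box a b c s r).
Proof.
apply: measurableX; last exact: mI2.
by apply: measurableX; [exact: measurable_itv|exact: mI2].
Qed.

Lemma box_le (a b c s r m : R) : 0 < r -> 0 < s -> (r <= m \/ s <= m) ->
  (@leb3 R (box a b c s r) <= (2 * s * (2 * m) * (2 * m))%:E)%E.
Proof.
move=> r0 s0 hm.
have m0 : 0 <= m by case: hm; lra.
rewrite /leb3 /box. rewrite (@product_measure1E _ _ _ _ R ((@lebesgue_measure R) \x (@lebesgue_measure R))%E (@lebesgue_measure R)); last 2 first.
  by apply: measurableX; [exact: measurable_itv|exact: mI2].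
  exact: mI2.
have h1 := @product_measure1E _ _ _ _ R (@lebesgue_measure R) (@lebesgue_measure R) _ _ (measurable_itv `](a - s), (a + s)[) (mI2 r b s).
rewrite [X in (X * _)%E]h1.
have h2 : (a - s < a + s) by lra.
rewrite [X in (X * _ * _)%E](@leb_itv_oo (a - s) (a + s) h2).
rewrite !EFinM; apply: lee_pmul.
- apply: mule_ge0; [rewrite lee_fin; lra|exact: measure_ge0].
- exact: measure_ge0.
- apply: lee_pmul; [rewrite lee_fin; lra|exact: measure_ge0| |exact: I2_le].
  by rewrite lee_fin; lra.
- exact: I2_le.
Qed.
End Box.
Arguments I2 {R}.
Arguments box {R}.
Arguments mbox {R}.
Arguments box_le {R}.
Lemma dyadic {R : realType} (e t : R) : 0 < t -> t < e ->
  exists k : nat, e / 2 ^+ k.+1 <= t /\ t < e / 2 ^+ k.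
Proof.
move=> t0 te.
have ex : exists k : nat, e / 2 ^+ k.+1 <= t.
  exists (Num.trunc (e / t)).
  have h1 := truncnS_gt (e / t).
  have h2 : ((Num.trunc (e / t)).+1%:R : R) <= 2 ^+ (Num.trunc (e / t)).+1.
    rewrite -natrX ler_nat; exact/ltnW/ltn_expl.
  have p2 : (0 : R) < 2 ^+ (Num.trunc (e / t)).+1 by apply: exprn_gt0.
  rewrite ler_pdivrMr // -ler_pdivrMl //.
  by rewrite mulrC; apply/ltW/(lt_le_trans h1 h2).
case: (ex_minnP ex) => k hk hmin.
exists k; split => //.
case: k hk hmin => [|k] hk hmin; first by rewrite expr0 divr1.
rewrite ltNge; apply/negP => hk'.
by have := hmin k hk'; rewrite ltnn.
Qed.

Lemma abs_le_norm3 {R : realType} (a b c : R) :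
  `|a| <= Num.sqrt (a ^+ 2 + b ^+ 2 + c ^+ 2) /\
  `|b| <= Num.sqrt (a ^+ 2 + b ^+ 2 + c ^+ 2) /\
  `|c| <= Num.sqrt (a ^+ 2 + b ^+ 2 + c ^+ 2).
Proof.
have ha := sqr_ge0 a; have hb := sqr_ge0 b; have hc := sqr_ge0 c.
split; [|split]; rewrite -sqrtr_sqr; apply: ler_wsqrtr; lra.
Qed.

Lemma abs_le_r {R : realType} {u v r : R} : 0 < r -> u ^+ 2 + v ^+ 2 <= r ^+ 2 ->
  -r <= u <= r.
Proof.
move=> r0 h; rewrite -ler_norml -(gtr0_norm r0) -!sqrtr_sqr; apply: ler_wsqrtr.
have := sqr_ge0 v; lra.
Qed.

Lemma point_bound {R : realType} {eps r : R} {x z : (R * R) * R} : 0 < r -> 0 <= rho r ->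
  norm3 (sub3 z x) < eps ->
  exists k : nat, `|Ur r z| / norm3 (sub3 z x) <=
    (2 * rho r / (eps / 2 ^+ k)) * \1_(box x.1.1 x.1.2 x.2 (eps / 2 ^+ k) r) z.
Proof.
move=> r0 rho0 hne.
have n0 : 0 <= norm3 (sub3 z x) by exact: sqrtr_ge0.
have e0 : 0 < eps by apply: le_lt_trans hne.
have rhs0 : forall k : nat, 0 <= (2 * rho r / (eps / 2 ^+ k)) * \1_(box x.1.1 x.1.2 x.2 (eps / 2 ^+ k) r) z.
  move=> k; apply: mulr_ge0; last by rewrite indicE.
  apply: divr_ge0; first lra.
  by apply: divr_ge0; [lra|apply: exprn_ge0].
have [nz|nz] := eqVneq (norm3 (sub3 z x)) 0.
  by exists 0%N; rewrite nz invr0 mulr0.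
have [zC|zC] := boolP (z \in Ccyl r); last first.
  exists 0%N; rewrite /Ur indicE (negbTE zC) mulr0 normr0 mul0r; exact: rhs0.
have npos : 0 < norm3 (sub3 z x) by rewrite lt_neqAle eq_sym nz.
have [k [hk1 hk2]] := dyadic _ _ npos hne.
exists k.
move: zC; rewrite inE /Ccyl /= => -[hz1 hz2].
have hin : box x.1.1 x.1.2 x.2 (eps / 2 ^+ k) r z.
  move: hk2; rewrite /norm3 /sub3 /=.
  have [h1 [h2 h3]] := abs_le_norm3 (z.1.1 - x.1.1) (z.1.2 - x.1.2) (z.2 - x.2).
  move=> hk2.
  move: h1 h2 h3; rewrite !ler_norml => /andP[h1a h1b] /andP[h2a h2b] /andP[h3a h3b].
  have hz2' := abs_le_r r0 hz2.
  have hz3' : - r <= z.2 <= r by apply: (abs_le_r (v:=z.1.2) r0); rewrite addrC.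
  split; [split|].
  - rewrite /= in_itv /=; apply/andP; split; lra.
  - split; rewrite /= in_itv /=; first by [].
    apply/andP; split; lra.
  - split; rewrite /= in_itv /=; first by [].
    apply/andP; split; lra.
rewrite indicE mem_set // mulr1.
rewrite /Ur indicE mem_set; last by rewrite /Ccyl.
rewrite mulr1 ger0_norm //.
have sk0 : 0 < eps / 2 ^+ k by apply: divr_gt0 => //; apply: exprn_gt0.
have hk1' : eps / 2 ^+ k / 2 <= norm3 (sub3 z x).
  by move: hk1; rewrite exprS invfM mulrA [_ / 2 / _]mulrAC.
rewrite ler_pdivrMr // mulrAC -[X in X * _]mulrA.
rewrite ler_pdivlMr //.
nra.
Qed.

Lemma int_cst_indic d (T : measurableType d) (R : realType)
  (mu : {measure set T -> \bar R}) (B : set T) (c : R) :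
  measurable B -> 0 <= c ->
  (\int[mu]_z (c * \1_B z)%:E = c%:E * mu B)%E.
Proof.
move=> mB c0.
rewrite (integralZl_indic measurableT (fun _ => B)) //; last first.
  by move=> /lt_le_trans/(_ c0); rewrite ltxx.
by rewrite integral_indic // setIT.
Qed.

Lemma Iloc_le_series (R : realType) (eps r : R) (x : (R * R) * R) :
  0 < eps -> 0 < r -> 0 <= rho r ->
  (Iloc eps r x <= \sum_(k <oo)
     ((2 * rho r / (eps / 2 ^+ k))%:E * @leb3 R (box x.1.1 x.1.2 x.2 (eps / 2 ^+ k) r)))%E.
Proof.
move=> e0 r0 rho0.
have c0 : forall k : nat, 0 <= 2 * rho r / (eps / 2 ^+ k).
  move=> k; apply: divr_ge0; first lra.
  by apply: divr_ge0; [lra|apply: exprn_ge0].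
pose g := fun (k : nat) (z : (R * R) * R) =>
  ((2 * rho r / (eps / 2 ^+ k)) * \1_(box x.1.1 x.1.2 x.2 (eps / 2 ^+ k) r) z)%:E.
have g0 : forall k z, (0 <= g k z)%E.
  by move=> k z; rewrite /g lee_fin; apply: mulr_ge0 => //; rewrite indicE.
have -> : (\sum_(k <oo)
     ((2 * rho r / (eps / 2 ^+ k))%:E * @leb3 R (box x.1.1 x.1.2 x.2 (eps / 2 ^+ k) r)))%E
   = (\int[@leb3 R]_(z in setT) \sum_(k <oo) g k z)%E.
  rewrite integral_nneseries //; last first.
    move=> k; apply/measurable_realfun.measurable_EFinP.
    apply: measurable_realfun.measurable_funM; first exact: measurable_cst.
    apply: measurable_realfun.measurable_indic; exact: mbox.
  apply: eq_eseriesr => k _.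
  by rewrite /g /= int_cst_indic //; exact: mbox.
rewrite /Iloc integral_mkcond.
apply: my_le_integral.
  move=> z _; rewrite /patch; case: ifP => // _.
  by rewrite lee_fin; apply: divr_ge0 => //; exact: sqrtr_ge0.
move=> z _; rewrite /patch; case: ifP => [hz|_]; last by apply: nneseries_ge0.
have hz' : norm3 (sub3 z x) < eps by move: hz; rewrite inE.
have [k hk] := point_bound r0 rho0 hz'.
apply: (@le_trans _ _ (g k z)); first by rewrite /g lee_fin.
apply: le_trans (nneseries_lim_ge k.+1 _); last by move=> n _ _; exact: g0.
rewrite big_nat_recr //= leeDr //.
by apply: sume_ge0 => i _; exact: g0.
Qed.

Lemma Iloc_bound (R : realType) (eps r : R) (x : (R * R) * R) (N : nat) :
  0 < eps -> 0 < r -> 0 <= rho r ->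
  (Iloc eps r x <= (16 * rho r * (N%:R * r ^+ 2 + 4 / 3 * (eps / 2 ^+ N) ^+ 2))%:E)%E.
Proof.
move=> e0 r0 rho0.
apply: le_trans (@Iloc_le_series R eps r x e0 r0 rho0) _.
apply: (@le_trans _ _ (\sum_(k <oo) (16 * rho r * uu r eps N k)%:E)%E).
  apply: lee_nneseries.
    move=> k _ _; apply: mule_ge0; last exact: measure_ge0.
    rewrite lee_fin; apply: divr_ge0; first lra.
    by apply: divr_ge0; [lra|apply: exprn_ge0].
  move=> k _.
  have sk0 : 0 < eps / 2 ^+ k by apply: divr_gt0 => //; apply: exprn_gt0.
  pose m := if (k < N)%N then r else eps / 2 ^+ k.
  have hm : r <= m \/ eps / 2 ^+ k <= m by rewrite /m; case: ifP => _; [left|right].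
  have -> : uu r eps N k = m ^+ 2 by rewrite /uu /m; case: ifP.
  apply: (@le_trans _ _ ((2 * rho r / (eps / 2 ^+ k))%:E * (2 * (eps / 2 ^+ k) * (2 * m) * (2 * m))%:E)%E).
    apply: lee_pmul; [|exact: measure_ge0|exact: lexx|exact: box_le r0 sk0 hm].
    rewrite lee_fin; apply: divr_ge0; first lra; exact: ltW.
  rewrite -EFinM lee_fin le_eqVlt; apply/orP; left; apply/eqP; field.
  by rewrite expf_neq0 //= gt_eqF.
apply: eseries_le.
  move=> k; apply: mulr_ge0; first lra.
  by rewrite /uu; case: ifP => _; apply: sqr_ge0.
move=> n; rewrite -mulr_sumr; apply: ler_wpM2l; first lra.
exact: uu_bound.
Qed.

Lemma expR1_le4 (R : realType) : expR (1 : R) <= 4.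
Proof.
have h1 := expR_ge1Dx (- (1 / 2) : R).
have h2 := expRxMexpNx_1 (1 / 2 : R).
have h3 : expR (1 : R) = expR (1 / 2) ^+ 2 by rewrite -expRM_natl; congr expR; field.
have p := expR_gt0 (1 / 2 : R).
rewrite h3; nra.
Qed.

Lemma ln5_gt1 (R : realType) : 1 < ln (5 : R).
Proof.
have h := expR1_le4 R.
rewrite -[X in X < _](@expRK R 1) ltr_ln ?posrE ?expR_gt0 //; lra.
Qed.

Lemma L_ge {R : realType} {r : R} : 0 < r -> r < 1 / 5 -> ln 5 < `|ln r|.
Proof.
move=> r0 r5.
have h : ln r < ln (1 / 5) by rewrite ltr_ln ?posrE //; lra.
have h5 : ln (1 / 5 : R) = - ln 5 by rewrite div1r lnV ?posrE.
have h1 := ln5_gt1 R.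
rewrite h5 in h.
rewrite ltr0_norm; last lra.
lra.
Qed.

Lemma pow2N_ge (R : realType) (r : R) (n : nat) : 0 < r -> `|ln r| <= n.+1%:R ->
  r < 1 -> 1 / (2 : R) ^+ (2 * n.+1) <= r.
Proof.
move=> r0 hn r1.
have lnr : ln r < 0 by apply: ln_lt0; rewrite r0 r1.
rewrite ltr0_norm // in hn.
have e1 : (expR (1 : R)) ^+ n.+1 <= 4 ^+ n.+1.
  apply: lerXn2r; rewrite ?nnegrE ?expR_ge0 //; exact: expR1_le4.
have e2 : r^-1 <= expR (1 : R) ^+ n.+1.
  rewrite -expRM_natl mulr1.
  have -> : r^-1 = expR (- ln r) by rewrite expRN lnK // posrE.
  rewrite ler_expR; lra.
have p4 : (0 : R) < 4 ^+ n.+1 by apply: exprn_gt0.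
rewrite exprM (_ : (2 : R) ^+ 2 = 4); last by rewrite expr2; lra.
rewrite ler_pdivrMr // mulrC -ler_pdivrMr // div1r.
exact: le_trans e2 e1.
Qed.

Lemma rho_pos {R : realType} {r : R} : 0 < r -> r < 1 / 5 ->
  0 < ln `|ln r| /\ 1 < `|ln r| /\ rho r = 1 / (r ^+ 2 * `|ln r| * ln `|ln r|).
Proof.
move=> r0 r5.
have h1 := L_ge r0 r5; have h2 := ln5_gt1 R.
split; last by split; [lra|].
apply: ln_gt0; lra.
Qed.

Lemma A_final (R : realType) (eps r : R) (x : (R * R) * R) :
  0 < eps -> eps <= 1 -> 0 < r -> r < 1 / 5 ->
  (Iloc eps r x <= (96 / ln `|ln r|)%:E)%E.
Proof.
move=> e0 e1 r0 r5.
have [l20 [L1 rhoE]] := rho_pos r0 r5.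
move: l20 L1 rhoE; set L := `|ln r|; set l2 := ln L => l20 L1 rhoE.
have P0 : 0 < r ^+ 2 * L * l2 by apply: mulr_gt0 => //; apply: mulr_gt0; [apply: exprn_gt0|lra].
have rho0 : 0 <= rho r by rewrite rhoE; apply: divr_ge0 => //; exact: ltW.
have [n /andP[hn1 hn2]] : exists n : nat, (n%:R <= L < n.+1%:R).
  by exists (Num.trunc L); apply: truncn_itv; lra.
apply: le_trans (@Iloc_bound R eps r x (2 * n.+1)%N e0 r0 rho0) _.
rewrite lee_fin.
have r1 : r < 1 by lra.
have hpow := @pow2N_ge R r n r0 (ltW hn2) r1.
have p2 : (0 : R) < 2 ^+ (2 * n.+1) by apply: exprn_gt0.
have hq0 : 0 <= eps / 2 ^+ (2 * n.+1) by apply: divr_ge0; [lra|exact: ltW].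
have hq1 : eps / 2 ^+ (2 * n.+1) <= r.
  apply: le_trans hpow; rewrite ler_pM2r ?invr_gt0 //.
have hq : (eps / 2 ^+ (2 * n.+1)) ^+ 2 <= r ^+ 2 by apply: lerXn2r; rewrite ?nnegrE //; lra.
move: hq; set q := (eps / 2 ^+ (2 * n.+1)) ^+ 2 => hq.
have q0 : 0 <= q by apply: sqr_ge0.
have ha : (2 * n.+1)%:R <= 2 * L + 2 :> R by rewrite natrM -natr1; lra.
move: ha; set a := ((2 * n.+1)%:R : R) => ha.
have r20 : 0 < r ^+ 2 by apply: exprn_gt0.
have e3 : 96 / l2 = (96 * r ^+ 2 * L) * (1 / (r ^+ 2 * L * l2)) by field; lra.
have e4 : 16 * (1 / (r ^+ 2 * L * l2)) * (a * r ^+ 2 + 4 / 3 * q) =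
  (16 * (a * r ^+ 2 + 4 / 3 * q)) * (1 / (r ^+ 2 * L * l2)) by ring.
rewrite rhoE e3 e4 ler_pM2r; last by rewrite div1r invr_gt0.
have h1 : 0 <= (2 * L + 2 - a) * r ^+ 2 by apply: mulr_ge0; lra.
have h2 : 0 <= (L - 1) * r ^+ 2 by apply: mulr_ge0; lra.
clear -h1 h2 hq r20.
lra.
Qed.

Lemma B_final (R : realType) (eps r : R) (x : (R * R) * R) :
  0 < eps -> 0 < r -> r < 1 / 5 ->
  (Iloc eps r x <= (64 / 3 * eps ^+ 2 / (r ^+ 2 * `|ln r| * ln `|ln r|))%:E)%E.
Proof.
move=> e0 r0 r5.
have [l20 [L1 rhoE]] := rho_pos r0 r5.
have rho0 : 0 <= rho r.
  rewrite rhoE; apply: divr_ge0 => //; apply: mulr_ge0; last exact: ltW.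
  apply: mulr_ge0; [exact: sqr_ge0|lra].
apply: le_trans (@Iloc_bound R eps r x 0%N e0 r0 rho0) _.
rewrite lee_fin rhoE expr0 divr1 mul0r add0r.
rewrite le_eqVlt; apply/orP; left; apply/eqP; rewrite /=.
ring.
Qed.

Lemma final_bound (R : realType) (d : R) : 0 < d ->
  exists eta : R, 0 < eta /\ forall (eps r : R) (x : (R * R) * R),
    0 < eps -> eps < eta -> 0 < r < 1 / 5 -> (Iloc eps r x <= d%:E)%E.
Proof.
move=> d0.
have h5 := ln5_gt1 R.
have l50 : 0 < ln (ln (5 : R)) by apply: ln_gt0.
set c0 := ln (5 : R) * ln (ln 5).
have c00 : 0 < c0 by apply: mulr_gt0 => //; lra.
set M := 96 / d.
have M0 : 0 < M by apply: divr_gt0.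
exists (Num.min 1 (Num.min (expR (- (2 * expR M))) (3 * d * c0 / 64))).
split.
  rewrite lt_min ltr01 /= lt_min expR_gt0 /=.
  by apply: divr_gt0 => //; apply: mulr_gt0 => //; apply: mulr_gt0 => //; lra.
move=> eps r x e0; rewrite !lt_min => /andP[e1 /andP[e2 e3]] /andP[r0 r5].
have [l20 [L1 rhoE]] := rho_pos r0 r5.
have hL5 := L_ge r0 r5.
move: l20 L1 rhoE hL5; set L := `|ln r|; set l2 := ln L => l20 L1 rhoE hL5.
have [hr|hr] := leP (r ^+ 2) eps.
- apply: le_trans (@A_final R eps r x e0 (ltW e1) r0 r5) _.
  rewrite lee_fin -/L -/l2.
  have hlr : ln (r ^+ 2) <= ln eps by rewrite ler_ln ?posrE // exprn_gt0.
  rewrite lnXn // in hlr.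
  have hle : ln eps < - (2 * expR M).
    by rewrite -[X in _ < X]expRK ltr_ln ?posrE ?expR_gt0.
  have hLr : expR M <= L.
    rewrite /L ltr0_norm; last by apply: ln_lt0; rewrite r0 /=; lra.
    move: hlr; rewrite mulr2n; lra.
  have hMl : M <= l2 by rewrite -(expRK M) /l2 ler_ln ?posrE ?expR_gt0 //; lra.
  rewrite ler_pdivrMr // mulrC -ler_pdivrMr //.
- apply: le_trans (@B_final R eps r x e0 r0 r5) _.
  rewrite lee_fin -/L -/l2.
  have hl2 : ln (ln (5 : R)) <= l2 by rewrite /l2 ler_ln ?posrE //; lra.
  have hc : c0 <= L * l2.
    rewrite /c0; apply: ler_pM => //; lra.
  have r20 : 0 < r ^+ 2 by apply: exprn_gt0.
  have P0 : 0 < r ^+ 2 * L * l2 by apply: mulr_gt0 => //; apply: mulr_gt0 => //; lra.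
  rewrite ler_pdivrMr //.
  have e3' : eps * 64 <= 3 * d * c0.
    by move: e3; rewrite ltr_pdivlMr //; lra.
  have k1 : 0 <= (r ^+ 2 - eps) * eps by apply: mulr_ge0; lra.
  have k2 : 0 <= (3 * d * c0 - eps * 64) * r ^+ 2 by apply: mulr_ge0; lra.
  have k3 : 0 <= (L * l2 - c0) * (d * r ^+ 2) by apply: mulr_ge0; [lra|apply: mulr_ge0; lra].
  nra.
Qed.

Lemma Iloc_ge0 (R : realType) (eps r : R) x : (0 <= Iloc eps r x)%E.
Proof.
apply: integral_ge0 => z _; rewrite lee_fin; apply: divr_ge0 => //; exact: sqrtr_ge0.
Qed.

Theorem lemma4p1 (R : realType) :
  (fun eps : R => supI eps) @ 0^'+ --> (0 : \bar R)%E.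
Proof.
have key : forall d : R, 0 < d -> \forall eps \near 0^'+,
    (0 <= supI eps)%E /\ (supI eps <= d%:E)%E.
  move=> d d0; have [eta [eta0 H]] := @final_bound R d d0.
  near=> eps.
  have e0 : 0 < eps by near: eps; exact: nbhs_right_gt.
  have e1 : eps < eta by near: eps; exact: nbhs_right_lt.
  split.
    apply: le_trans (@Iloc_ge0 R eps (1 / 10) (0, 0, 0)) _.
    apply: ereal_sup_ubound; exists (0, 0, 0), (1 / 10); split => //.
    by apply/andP; split; lra.
  apply: ge_ereal_sup => _ [y [r [hr ->]]].
  exact: (H eps r y e0 e1 hr).
apply: cvg_EFin.
  have := key 1 ltr01; apply: filterS => eps [h1 h2].
  by rewrite ge0_fin_numE // (le_lt_trans h2) // ltry.
apply/cvgrPdist_le => d d0.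
have := key d d0; apply: filterS => eps [h1 h2].
rewrite sub0r normrN /= ger0_norm; last by rewrite fine_ge0.
have fe : supI eps \is a fin_num by rewrite ge0_fin_numE // (le_lt_trans h2) // ltry.
by rewrite -lee_fin fineK.
Unshelve. all: by end_near.
Qed.
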